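(* Let $\mathcal{A}=\{1,\dots,K\}$ be a set of arms, let $a^*\in\mathcal{A}$ be a target arm, and for each $a\in\mathcal{A}$ let $m_a\geq 1$ be an integer and $\vec{y}_a\in\mathbb{R}^{m_a}$ a reward vector. For perturbations $\vec{\epsilon}_a\in\mathbb{R}^{m_a}$ put $\tilde{\mu}_a=(\vec{y}_a+\vec{\epsilon}_a)^T\mathbf{1}/m_a$, where $\mathbf{1}$ is the all-ones vector. Fix a margin $\xi>0$ and consider $$P_1:\quad \min_{\{\vec{\epsilon}_a\}_{a\in\mathcal{A}}}\ \sum_{a\in\mathcal{A}}\|\vec{\epsilon}_a\|_2^2\quad\text{s.t.}\quad \tilde{\mu}_{a^*}\geq \tilde{\mu}_a+\xi\ \ \forall a\neq a^*.$$ Then $P_1$ is a quadratic program with linear constraints and, for every reward instance $\{\vec{y}_a\}_{a\in\mathcal{A}}$, it has at least one optimal solution. Moreover, if the rewards of an $\epsilon$-greedy algorithm's data buffer are replaced by $\vec{y}_a+\vec{\epsilon}_a$ for such a solution, then at round $T+1$ the $\epsilon$-greedy algorithm pulls $a^*$ with probability at least $1-\frac{K-1}{K}\alpha_{T+1}$.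
   Context: Offline attack setting: a stochastic bandit algorithm pulls arms $a_1,\dots,a_T$ and receives rewards $r_t=\mu_{a_t}+\eta_t$ with zero-mean $\sigma$-subGaussian noise; $m_a$ is the number of rounds $t\le T$ with $a_t=a$ and $\vec{y}_a=(r_t:a_t=a)^T$. An attacker replaces each $r_t$ by $r_t+\epsilon_t$ (so arm $a$'s rewards become $\vec{y}_a+\vec{\epsilon}_a$) before the algorithm updates; $\tilde{\mu}_a$ is then the post-attack empirical mean of arm $a$. The $\epsilon$-greedy algorithm with rate function $\alpha_t\in[0,1]$ at round $t$ pulls an arm drawn uniformly from $\mathcal{A}$ with probability $\alpha_t$, and otherwise pulls $\arg\max_a$ of the current empirical means. *)

(* Defs.v *)
From HB Require Import structures.
From mathcomp Require Import all_boot all_order all_algebra.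
From mathcomp Require Import reals.
Set Implicit Arguments. Unset Strict Implicit. Unset Printing Implicit Defensive.
Import Order.TTheory GRing.Theory Num.Theory.
Local Open Scope ring_scope.

Definition armvecs (R : realType) (K : nat) (m : 'I_K -> nat) :=
  forall a : 'I_K, 'rV[R]_(m a).

Definition post_mean (R : realType) (K : nat) (m : 'I_K -> nat)
  (y eps : armvecs R m) (a : 'I_K) : R :=
  (\sum_(i < m a) (y a 0 i + eps a 0 i)) / (m a)%:R.

Definition attack_cost (R : realType) (K : nat) (m : 'I_K -> nat)
  (eps : armvecs R m) : R :=
  \sum_(a < K) \sum_(i < m a) (eps a 0 i) ^+ 2.

Definition P1_feasible (R : realType) (K : nat) (m : 'I_K -> nat)
  (y : armvecs R m) (astar : 'I_K) (xi : R) (eps : armvecs R m) : Prop :=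
  forall a : 'I_K, a != astar ->
    post_mean y eps astar >= post_mean y eps a + xi.

Definition P1_optimal (R : realType) (K : nat) (m : 'I_K -> nat)
  (y : armvecs R m) (astar : 'I_K) (xi : R) (eps : armvecs R m) : Prop :=
  P1_feasible y astar xi eps /\
  forall eps' : armvecs R m, P1_feasible y astar xi eps' ->
    attack_cost eps <= attack_cost eps'.

Definition is_argmax (R : realType) (K : nat) (mu : 'I_K -> R) (g : 'I_K) : Prop :=
  forall a : 'I_K, mu a <= mu g.

(* Probability that epsilon-greedy with exploration rate alpha pulls arm a,
   when its greedy choice (an arg max of the current empirical means) is g:
   uniform over the K arms with probability alpha, g with probability 1-alpha. *)
Definition eps_greedy_prob (R : realType) (K : nat) (alpha : R) (g a : 'I_K) : R :=
  alpha * (K%:R)^-1 + (1 - alpha) * (a == g)%:R.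

(* Main.v *)
Require Import Defs.
From HB Require Import structures.
From mathcomp Require Import all_boot all_order all_algebra.
From mathcomp Require Import reals classical_sets ring lra.
Import Order.TTheory GRing.Theory Num.Theory.
Local Open Scope ring_scope.
Local Open Scope classical_set_scope.
Lemma cs (R : realType) n (v : 'rV[R]_n) : (0 < n)%N ->
  n%:R * ((\sum_i v 0 i) / n%:R) ^+ 2 <= \sum_i v 0 i ^+ 2.
Proof.
move=> n0; set S := \sum_i v 0 i; set D := S / n%:R.
have hS : S = n%:R * D by rewrite /D mulrC divfK // pnatr_eq0 -lt0n.
have : 0 <= \sum_i (v 0 i - D) ^+ 2 by apply: sumr_ge0 => i _; apply: sqr_ge0.
rewrite (eq_bigr (fun i => v 0 i ^+ 2 - (2 * D) * v 0 i + D ^+ 2)); last by move=> i _; ring.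
rewrite big_split /= sumrB -mulr_sumr sumr_const card_ord -/S hS -mulr_natl.
move=> h; nra.
Qed.

Lemma maxdiff (R : realType) (b x y : R) : x <= y -> 0 <= Num.max 0 (b-x) - Num.max 0 (b-y) <= y - x.
Proof.
move=> hxy; case: (lerP 0 (b-x)) => h1; case: (lerP 0 (b-y)) => h2;
rewrite ?(max_r h1) ?(max_r h2) ?(max_l (ltW h1)) ?(max_l (ltW h2)); apply/andP; split; lra.
Qed.

Lemma root_exists (R : realType) (F : R -> R) (L lo hi : R) :
  0 < L -> lo <= hi -> F lo <= 0 -> 0 <= F hi ->
  (forall x y, x <= y -> 0 <= F y - F x <= L * (y - x)) ->
  exists c, F c = 0.
Proof.
move=> L0 lohi Flo Fhi Hl.
pose E := [set x | x <= hi /\ F x <= 0].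
have Elo : E lo by [].
have hs : has_sup E by split; [exists lo | exists hi => x [] ].
have ub := sup_upper_bound hs.
have cle : sup E <= hi by apply: ge_sup; [exists lo | move=> x []].
have loc : lo <= sup E by apply: ub.
exists (sup E); set c := sup E in ub cle loc *.
case: (ltrgtP (F c) 0) => // hF.
- pose x := Num.min hi (c + - F c / L).
  have hx1 : x <= hi by rewrite ge_min lexx.
  have dpos : 0 < - F c / L by apply: divr_gt0 => //; lra.
  have cx : c <= x by rewrite le_min cle /=; lra.
  have hx2 : x <= c + - F c / L by rewrite ge_min lexx orbT.
  have := Hl _ _ cx => /andP [_ h].
  have h2 : L * (x - c) <= - F c.
    have -> : - F c = L * (- F c / L) by rewrite mulrC divfK // gt_eqF.
    by rewrite ler_pM2l //; lra.
  have Ex : E x by split => //; lra.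
  have xc := ub _ Ex.
  have xeq : x = c by apply/le_anti; rewrite xc cx.
  have chi : c < hi.
    rewrite lt_neqAle cle andbT; apply/negP => /eqP ch.
    by move: Fhi; rewrite -ch; lra.
  case: (lerP hi (c + - F c / L)) => hh.
    by move: xeq; rewrite /x (min_l hh); lra.
  by move: xeq; rewrite /x (min_r (ltW hh)); lra.
- have epos : 0 < F c / L by apply: divr_gt0.
  have [e [eh Fe] ce] := sup_adherent epos hs.
  rewrite -/c in ce.
  have ec : e <= c by apply: ub.
  have := Hl _ _ ec => /andP [_ h].
  have h2 : L * (c - e) < F c.
    have -> : F c = L * (F c / L) by rewrite mulrC divfK // gt_eqF.
    by rewrite ltr_pM2l //; lra.
  lra.
Qed.

Section Main.
Variables (R : realType) (K : nat) (astar : 'I_K) (m : 'I_K -> nat)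
  (hm : forall a, (0 < m a)%N) (y : armvecs R m) (xi : R).

Definition M a : R := (m a)%:R.
Lemma Mpos a : 0 < M a. Proof. by rewrite /M ltr0n. Qed.
Lemma Mneq0 a : M a != 0. Proof. by rewrite gt_eqF // Mpos. Qed.
Definition mu a := (\sum_(i < m a) y a 0 i) / M a.
Definition b a := mu a + xi.
Definition Dm (e : armvecs R m) a := (\sum_(i < m a) e a 0 i) / M a.

Lemma pmE e a : post_mean y e a = mu a + Dm e a.
Proof. by rewrite /post_mean big_split /= mulrDl. Qed.

Definition dd c a := if a == astar then c - mu astar else - Num.max 0 (b a - c).
Definition epsc c : armvecs R m := fun a => \row_(i < m a) dd c a.
Definition Fc c := M astar * (c - mu astar) - \sum_(a | a != astar) M a * Num.max 0 (b a - c).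

Lemma Dm_eps c a : Dm (epsc c) a = dd c a.
Proof.
rewrite /Dm /epsc (eq_bigr (fun _ => dd c a)); last by move=> i _; rewrite mxE.
by rewrite sumr_const card_ord -mulr_natr mulfK // Mneq0.
Qed.

Lemma feas c : P1_feasible y astar xi (epsc c).
Proof.
move=> a aa; rewrite !pmE !Dm_eps /dd eqxx (negbTE aa) /b.
have := le_max (b a - c) 0 (b a - c); rewrite lexx orbT /b => h. lra.
Qed.

Lemma cost_eps c : attack_cost (epsc c) = \sum_a M a * dd c a ^+ 2.
Proof.
apply: eq_bigr => a _; rewrite (eq_bigr (fun _ => dd c a ^+ 2)); last by move=> i _; rewrite mxE.
by rewrite sumr_const card_ord -mulr_natl.
Qed.

Lemma opt c : Fc c = 0 -> P1_optimal y astar xi (epsc c).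
Proof.
move=> Fc0; split; first exact: feas.
move=> e' fe'; rewrite cost_eps.
have h1 : \sum_a M a * Dm e' a ^+ 2 <= attack_cost e'.
  by apply: ler_sum => a _; apply: cs.
apply: le_trans h1.
rewrite -subr_ge0 -sumrB.
have h2 : forall a, 2 * (M a * dd c a * (Dm e' a - dd c a)) <= M a * Dm e' a ^+ 2 - M a * dd c a ^+ 2.
  move=> a; have := Mpos a => hM.
  have : 0 <= M a * (Dm e' a - dd c a) ^+ 2 by apply: mulr_ge0; [lra | apply: sqr_ge0].
  move=> h; nra.
apply: le_trans (ler_sum _ (fun a _ => h2 a)).
rewrite -mulr_sumr; apply: mulr_ge0 => //.
rewrite (bigD1 astar) //=.
set P := Dm e' astar - dd c astar.
have h3 : forall a, a != astar ->
   - (M a * Num.max 0 (b a - c)) * P <= M a * dd c a * (Dm e' a - dd c a).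
  move=> a aa; have := fe' a aa; rewrite !pmE /P /dd eqxx (negbTE aa) => fa.
  have hM := Mpos a.
  case: (lerP 0 (b a - c)) => hb.
    move: hb fa; rewrite /b => hb fa. 
    have hq : 0 <= mu astar + Dm e' astar - (mu a + Dm e' a + xi) by lra.
    have := mulr_ge0 (mulr_ge0 (ltW hM) hb) hq. nra.
  nra.
have h4 := @ler_sum _ _ (index_enum _) (fun a => a != astar) _ _ h3. rewrite -mulr_suml sumrN in h4.
have dA : dd c astar = c - mu astar by rewrite /dd eqxx.
have hs : \sum_(a | a != astar) M a * Num.max 0 (b a - c) = M astar * (c - mu astar).
  by move: Fc0; rewrite /Fc; lra.
rewrite hs in h4; move: h4; rewrite /P dA; lra.
Qed.

Lemma Fc_root : exists c, Fc c = 0.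
Proof.
pose S := \sum_(a | a != astar) Num.max 0 (b a - mu astar).
have S0 : 0 <= S by apply: sumr_ge0 => a _; rewrite le_max lexx.
have Ls0 : 0 <= \sum_(a | a != astar) M a by apply: sumr_ge0 => a _; apply: ltW; apply: Mpos.
have hMs := Mpos astar.
apply: (@root_exists _ Fc (M astar + \sum_(a | a != astar) M a) (mu astar) (mu astar + S)).
- lra.
- lra.
- rewrite /Fc subrr mulr0 sub0r oppr_le0; apply: sumr_ge0 => a _.
  by apply: mulr_ge0; [apply: ltW; apply: Mpos | rewrite le_max lexx].
- rewrite /Fc big1 ?subr0.
    by apply: mulr_ge0; lra.
  move=> a aa; apply/eqP; rewrite mulf_eq0; apply/orP; right; apply/eqP.
  apply: max_l.
  have : Num.max 0 (b a - mu astar) <= S.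
    by rewrite /S (bigD1 a) //= lerDl; apply: sumr_ge0 => i _; rewrite le_max lexx.
  have := le_max (b a - mu astar) 0 (b a - mu astar); rewrite lexx orbT => h1 h2.
  lra.
- move=> x z xz.
  have hd : \sum_(a | a != astar) M a * (Num.max 0 (b a - x) - Num.max 0 (b a - z)) =
    \sum_(a | a != astar) M a * Num.max 0 (b a - x) - \sum_(a | a != astar) M a * Num.max 0 (b a - z).
    by rewrite -sumrB; apply: eq_bigr => a _; rewrite mulrBr.
  have lo : 0 <= \sum_(a | a != astar) M a * (Num.max 0 (b a - x) - Num.max 0 (b a - z)).
    apply: sumr_ge0 => a _; apply: mulr_ge0; first by apply: ltW; apply: Mpos.
    by have /andP[] := @maxdiff _ (b a) _ _ xz.
  have up : \sum_(a | a != astar) M a * (Num.max 0 (b a - x) - Num.max 0 (b a - z))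
        <= (\sum_(a | a != astar) M a) * (z - x).
    rewrite mulr_suml; apply: ler_sum => a _; apply: ler_wpM2l; first by apply: ltW; apply: Mpos.
    by have /andP[] := @maxdiff _ (b a) _ _ xz.
  rewrite /Fc; apply/andP; split; nra.
Qed.
End Main.

Theorem theorem1 (R : realType) (K : nat) (astar : 'I_K)
  (m : 'I_K -> nat) (hm : forall a : 'I_K, (0 < m a)%N)
  (y : armvecs R m) (xi : R) (hxi : 0 < xi)
  (alpha : R) (ha0 : 0 <= alpha) (ha1 : alpha <= 1) :
  (exists eps : armvecs R m, P1_optimal y astar xi eps) /\
  (forall eps : armvecs R m, P1_optimal y astar xi eps ->
     forall g : 'I_K, is_argmax (post_mean y eps) g ->
       eps_greedy_prob alpha g astar >= 1 - (K.-1)%:R / K%:R * alpha).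
Proof.
split.
  have [c hc] := @Fc_root R K astar m hm y xi.
  by exists (@epsc R K astar m y xi c); exact: (@opt R K astar m hm y xi c hc).


move=> eps [fe _] g hg.
have gA : g = astar.
  apply/eqP; apply/negP => /negP ga.
  have := fe g ga; have := hg astar; lra.
subst g; rewrite /eps_greedy_prob eqxx.
case: K astar {m hm y eps fe hg} => [[]//|k] _ /=.
have hk : (k.+1)%:R != 0 :> R by rewrite pnatr_eq0.
have -> : (k.+1)%:R = k%:R + 1 :> R by rewrite -natr1.
rewrite mulr1 le_eqVlt; apply/orP; left; apply/eqP.
move: hk; rewrite -natr1 => hk; field => //.
Qed.
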